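(* Let $r\ge 2$ and let $L_1$ and $L_2$ be $2$-point lines of $M(K_{r+2})$ such that $L_1\cup L_2$ is a $4$-element circuit. Then the set of flats of $M(K_{r+2})$ that contain $L_1$ or $L_2$ is a proper modular cut of $M(K_{r+2})$. Moreover, the single-element extension of $M(K_{r+2})$ corresponding to this modular cut is isomorphic to the vector matroid, over $\mathbb{R}$ and also over $\mathrm{GF}(3)$, of the matrix $[\,I_{r+1}\mid D_{r+1}\mid v\,]$, where $v=[1,-1,-1,0,\dots,0]^T\in\mathbb{Z}^{r+1}$.
   Context: $M(K_n)$ is the cycle matroid of the complete graph $K_n$. $D_n$ denotes the $n\times\binom n2$ matrix whose columns are all vectors in $\mathbb{Z}^n$ with exactly two nonzero entries, the first (topmost) equal to $1$ and the second equal to $-1$. A modular cut of a matroid $M$ is a set $\mathcal F$ of flats of $M$ such that (i) if $F\in\mathcal F$ and $F'$ is a flat containing $F$ then $F'\in\mathcal F$, and (ii) if $F_1,F_2\in\mathcal F$ and $r(F_1)+r(F_2)=r(F_1\cup F_2)+r(F_1\cap F_2)$ then $F_1\cap F_2\in\mathcal F$. It is proper if it does not contain all flats of $M$. Each modular cut $\mathcal F$ corresponds to a unique single-element extension $N$ of $M$ by an element $e$ in which $\mathcal F$ is exactly the set of flats of $M$ spanning $e$ in $N$. *)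

(* Defs.v *)
From HB Require Import structures.
From mathcomp Require Import all_boot all_order all_algebra.
From mathcomp Require Import reals.
Set Implicit Arguments. Unset Strict Implicit. Unset Printing Implicit Defensive.
Import Order.TTheory GRing.Theory Num.Theory.

Definition is_rank (T : finType) (r : {set T} -> nat) : Prop :=
  [/\ forall X : {set T}, r X <= #|X|,
      forall X Y : {set T}, X \subset Y -> r X <= r Y &
      forall X Y : {set T}, r (X :|: Y) + r (X :&: Y) <= r X + r Y].

Definition flat (T : finType) (r : {set T} -> nat) (F : {set T}) : bool :=
  [forall e, (e \notin F) ==> (r F < r (e |: F))].

Definition circuit (T : finType) (r : {set T} -> nat) (C : {set T}) : bool :=
  (r C < #|C|) && [forall D : {set T}, (D \proper C) ==> (r D == #|D|)].

Definition two_point_line (T : finType) (r : {set T} -> nat) (L : {set T}) : bool :=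
  [&& flat r L, r L == 2 & #|L| == 2].

Definition modular_cut (T : finType) (r : {set T} -> nat) (Fc : {set {set T}}) : Prop :=
  [/\ forall F : {set T}, F \in Fc -> flat r F,
      forall F F' : {set T}, F \in Fc -> flat r F' -> F \subset F' -> F' \in Fc &
      forall F1 F2 : {set T}, F1 \in Fc -> F2 \in Fc ->
        r F1 + r F2 = r (F1 :|: F2) + r (F1 :&: F2) -> F1 :&: F2 \in Fc].

Definition proper_modular_cut (T : finType) (r : {set T} -> nat) (Fc : {set {set T}}) : Prop :=
  modular_cut r Fc /\ exists F : {set T}, flat r F && (F \notin Fc).

(** rN (a matroid on [option T], the new element being [None]) is the
    single-element extension of M = (T, r) corresponding to Fc:
    N \ None = M, and Fc is exactly the set of flats of M spanning None in N. *)
Definition extension_of_cut (T : finType) (r : {set T} -> nat) (Fc : {set {set T}})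
    (rN : {set option T} -> nat) : Prop :=
  [/\ is_rank rN,
      forall X : {set T}, rN (Some @: X) = r X &
      forall F : {set T}, flat r F ->
        (F \in Fc) = (rN (None |: Some @: F) == rN (Some @: F))].

Definition matroid_iso (T1 T2 : finType) (r1 : {set T1} -> nat) (r2 : {set T2} -> nat) : Prop :=
  exists f : T1 -> T2, bijective f /\ forall X : {set T1}, r2 (f @: X) = r1 X.

Definition edge (n : nat) := {p : 'I_n * 'I_n | p.1 < p.2}.

Definition eadj (n : nat) (A : {set edge n}) : rel 'I_n :=
  fun x y => [exists e in A, (((val e).1 == x) && ((val e).2 == y))
                           || (((val e).1 == y) && ((val e).2 == x))].

Definition acyclic (n : nat) (A : {set edge n}) : bool :=
  [forall e in A, ~~ connect (eadj (A :\ e)) (val e).1 (val e).2].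

Definition MK (n : nat) (X : {set edge n}) : nat :=
  \max_(A : {set edge n} | (A \subset X) && acyclic A) #|A|.

Definition vrank (K : fieldType) (m : nat) (C : finType) (col : C -> 'cV[K]_m)
    (X : {set C}) : nat :=
  \rank (\sum_(c | c \in X) <<trmx (col c)>>)%MS.

(** Columns of [I_m | D_m | v] with v = [1,-1,-1,0,...,0]^T (over int). *)
Definition colT (m : nat) := ('I_m + (edge m + unit))%type.

Definition unitcol (m : nat) (i : 'I_m) : 'cV[int]_m := (\col_k (k == i)%:R)%R.

Definition vcol (m : nat) : 'cV[int]_m :=
  \col_k (if (k : nat) == 0 then 1%R else if ((k : nat) == 1) || ((k : nat) == 2) then (-1)%R else 0%R).

Definition Icol (m : nat) (c : colT m) : 'cV[int]_m :=
  match c with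
  | inl i => unitcol i
  | inr (inl e) => (unitcol (val e).1 - unitcol (val e).2)%R
  | inr (inr _) => vcol m
  end.

Definition colK (K : fieldType) (m : nat) (c : colT m) : 'cV[K]_m :=
  map_mx (fun z : int => (z%:~R)%R) (Icol c).

(* Main.v *)
Require Import Defs.
From HB Require Import structures.
From mathcomp Require Import all_boot all_order all_algebra.
From mathcomp Require Import reals.
From mathcomp Require Import all_fingroup.
From mathcomp Require Import zify.
Set Implicit Arguments. Unset Strict Implicit. Unset Printing Implicit Defensive.
Import Order.TTheory GRing.Theory Num.Theory.
Section Lin.
Variables (K : fieldType) (m : nat) (I : finType) (u : I -> 'rV[K]_m).
Definition span (A : {set I}) := (\sum_(i in A) <<u i>>)%MS.
Definition rk A := \rank (span A).

Lemma mem_span i (A : {set I}) : i \in A -> (u i <= span A)%MS.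
Proof. move=> iA; apply: (sumsmx_sup i) => //; rewrite genmxE. exact: submx_refl. Qed.

Lemma span_subP (A : {set I}) (V : 'M_m) : reflect (forall i, i \in A -> (u i <= V)%MS) (span A <= V)%MS.
Proof. apply: (iffP sumsmx_subP) => H i /H; by rewrite genmxE. Qed.

Lemma span_sub (A B : {set I}) : A \subset B -> (span A <= span B)%MS.
Proof. move=> AB; apply/span_subP => i iA; apply: mem_span; exact: (subsetP AB). Qed.

Lemma span_setU (A B : {set I}) : (span (A :|: B) == span A + span B)%MS.
Proof.
apply/andP; split.
- apply/span_subP => i; rewrite inE => /orP[iA|iB].
  + apply: submx_trans (addsmxSl _ _); exact: mem_span.
  + apply: submx_trans (addsmxSr _ _); exact: mem_span.
- rewrite addsmx_sub; apply/andP; split; apply: span_sub; [exact: subsetUl | exact: subsetUr].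
Qed.

Lemma span_set1 i : (span [set i] == <<u i>>)%MS.
Proof.
apply/andP; split.
- apply/span_subP => j; rewrite inE => /eqP->; rewrite genmxE; exact: submx_refl.
- rewrite genmxE; apply: mem_span; exact: set11.
Qed.

Lemma rk_setU1 i (A : {set I}) : rk (i |: A) = rk A + ~~ (u i <= span A)%MS.
Proof.
rewrite /rk (eqmxP (span_setU [set i] A)) addsmxC.
have e1 : (span [set i] :=: <<u i>>)%MS by apply/eqmxP; exact: span_set1.
rewrite (adds_eqmx (eqmx_refl (span A)) e1).
case: (boolP (u i <= span A)%MS) => H.
- by rewrite addn0 (addsmx_idPl (_ : (<<u i>> <= span A)%MS)) // genmxE.
- have := mxrank_sum_cap (span A) <<u i>>%MS.
  have r1 : \rank <<u i>> = 1.
    rewrite genmxE rank_rV; apply/eqP; rewrite eqb1; apply: contraNneq H => ->.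
    exact: sub0mx.
  have r0 : \rank (span A :&: <<u i>>)%MS = 0.
    have hle : \rank (span A :&: <<u i>>)%MS <= 1.
      by have := mxrankS (capmxSr (span A) <<u i>>%MS); rewrite r1.
    case: (posnP (\rank (span A :&: <<u i>>)%MS)) => // Hpos.
    have Hr : \rank (span A :&: <<u i>>)%MS = 1 by apply/eqP; rewrite eqn_leq hle.
    have := (mxrank_leqif_sup (capmxSr (span A) <<u i>>%MS)).2.
    rewrite Hr r1 eqxx => /esym Hs.
    case/negP: H; have Hs2 := submx_trans Hs (capmxSl (span A) <<u i>>%MS).
    by rewrite genmxE in Hs2.
  rewrite r1 r0 addn0 => ->; by rewrite addn1.
Qed.

Lemma rk_card (A : {set I}) : rk A <= #|A|.
Proof.
rewrite /rk /span -sum1_card.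
apply: (big_ind2 (fun (X : 'M_m) (n : nat) => \rank X <= n)).
- by rewrite mxrank0.
- move=> x1 x2 y1 y2 h1 h2; apply: leq_trans (mxrank_adds_leqif x1 y1) _.
  exact: leq_add.
- move=> i _; rewrite genmxE; exact: rank_leq_row.
Qed.

Lemma rk_mono (A B : {set I}) : A \subset B -> rk A <= rk B.
Proof. by move=> AB; apply: mxrankS; apply: span_sub. Qed.

Lemma rk_submod (A B : {set I}) : rk (A :|: B) + rk (A :&: B) <= rk A + rk B.
Proof.
rewrite /rk (eqmxP (span_setU A B)) -(mxrank_sum_cap (span A) (span B)) leq_add2l.
apply: mxrankS; rewrite sub_capmx; apply/andP; split; apply: span_sub;
  [exact: subsetIl | exact: subsetIr].
Qed.

Lemma rk_is_rank : is_rank rk.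
Proof. split; [exact: rk_card | exact: rk_mono | exact: rk_submod]. Qed.

Lemma rk_setD1 i (A : {set I}) : i \in A -> rk A = rk (A :\ i) + ~~ (u i <= span (A :\ i))%MS.
Proof. by move=> iA; rewrite -{1}(setD1K iA) rk_setU1. Qed.

Lemma indep_notin (A : {set I}) : rk A = #|A| -> forall i, i \in A -> ~~ (u i <= span (A :\ i))%MS.
Proof.
move=> H i iA; have := rk_setD1 iA; rewrite H (cardsD1 i A) iA.
have := rk_card (A :\ i); case: (u i <= _)%MS => //= h1 h2.
by move: h1; rewrite addn0 in h2; rewrite -h2 add1n ltnn.
Qed.

Lemma indep_of (A : {set I}) : (forall i, i \in A -> ~~ (u i <= span (A :\ i))%MS) -> rk A = #|A|.
Proof.
move: {2}#|A| (erefl #|A|) => k; elim: k A => [|k IH] A hk H.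
- by rewrite (cards0_eq hk) /rk /span big_set0 mxrank0 cards0.
- have [i iA]: exists i, i \in A by apply/set0Pn; rewrite -card_gt0 hk.
  have hk' : #|A :\ i| = k by move: hk; rewrite (cardsD1 i A) iA add1n => -[].
  rewrite (rk_setD1 iA) (H i iA) (IH (A :\ i)) ?hk' ?hk ?addn1 //.
  move=> j; rewrite in_setD1 => /andP[ji jA]; apply: contra (H j jA) => h.
  apply: submx_trans h _; apply: span_sub; apply: setSD; exact: subD1set.
Qed.

Lemma basis_exists (A : {set I}) : exists B : {set I}, [/\ B \subset A, rk B = #|B| & rk B = rk A].
Proof.
pose P (B : {set I}) := (B \subset A) && (rk B == #|B|).
have P0 : P set0 by rewrite /P sub0set /rk /span big_set0 mxrank0 cards0.
case: (@arg_maxnP _ set0 P (fun B => #|B|) P0) => B /andP[BA /eqP HB] Hmax.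
exists B; split => //; apply/eqP; rewrite eqn_leq rk_mono //= /rk.
apply: mxrankS; apply/span_subP => i iA.
apply/negPn/negP => Hi.
have iB : i \notin B by apply: contra Hi => iB; apply: mem_span.
have := Hmax (i |: B); rewrite /P subUset sub1set iA BA /= rk_setU1 HB Hi cardsU1 iB /=.
by rewrite add1n addn1 eqxx => /(_ isT); rewrite ltnn.
Qed.
End Lin.
Lemma eadj_sym n (A : {set edge n}) : symmetric (eadj A).
Proof. by move=> x y; rewrite /eadj; apply: eq_existsb => e; rewrite orbC. Qed.

Section Graph.
Variables (K : fieldType) (n m : nat) (p : 'I_n -> 'rV[K]_m).
Hypothesis Hp : forall S : {set 'I_n}, exists psi : 'cV[K]_m, exists s : K,
  (s != 0)%R /\ forall x y, ((p x - p y) *m psi = (s * ((x \in S)%:R - (y \in S)%:R))%:M)%R.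

Definition ecol (e : edge n) := (p (val e).1 - p (val e).2)%R.

Lemma adj_sub (A : {set edge n}) x y : eadj A x y -> ((p x - p y)%R <= span ecol A)%MS.
Proof.
case/existsP => e /andP[eA /orP[]] /andP[/eqP h1 /eqP h2].
- by rewrite -h1 -h2; apply: mem_span.
- rewrite -h1 -h2 -opprB eqmx_opp; exact: mem_span.
Qed.

Lemma conn_sub (A : {set edge n}) x y : connect (eadj A) x y -> ((p x - p y)%R <= span ecol A)%MS.
Proof.
case/connectP => s hs ->; elim: s x hs => [|z s IH] x /=.
- by rewrite subrr sub0mx.
- case/andP => hxz hs.
  have -> : (p x - p (last z s) = (p x - p z) + (p z - p (last z s)))%R.
    by rewrite addrA subrK.
  rewrite addmx_sub ?IH //; exact: adj_sub.
Qed.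

Lemma kill_sub (V : 'M[K]_m) (psi : 'cV[K]_m) (w : 'rV[K]_m) :
  (V *m psi = 0)%R -> (w <= V)%MS -> (w *m psi = 0)%R.
Proof. by move=> h /submxP[D ->]; rewrite -mulmxA h mulmx0. Qed.

Lemma cut_kill (A : {set edge n}) (S : {set 'I_n}) (psi : 'cV[K]_m) s :
  (forall x y, ((p x - p y) *m psi = (s * ((x \in S)%:R - (y \in S)%:R))%:M)%R) ->
  (forall e, e \in A -> ((val e).1 \in S) = ((val e).2 \in S)) ->
  (span ecol A *m psi = 0)%R.
Proof.
move=> Hpsi HS; apply/eqP; rewrite -sub_kermx; apply/span_subP => e eA.
by rewrite sub_kermx /ecol Hpsi (HS e eA) subrr mulr0 raddf0.
Qed.

Lemma scal1_eq0 (a : K) : (a%:M = 0 :> 'M_1)%R -> a = 0%R.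
Proof. by move/matrixP/(_ 0 0)%R; rewrite !mxE eqxx mulr1n. Qed.

Lemma sub_conn (A : {set edge n}) x y : ((p x - p y)%R <= span ecol A)%MS = connect (eadj A) x y.
Proof.
apply/idP/idP; last exact: conn_sub.
apply: contraTT => nc; apply/negP => hsub.
pose S := [set z | connect (eadj A) x z].
case: (Hp S) => psi [s [s0 Hpsi]].
have kill : (span ecol A *m psi = 0)%R.
  apply: (cut_kill Hpsi) => e eA; rewrite !inE.
  have h12 : eadj A (val e).1 (val e).2.
    by apply/existsP; exists e; rewrite eA !eqxx.
  apply/idP/idP => h.
  - by apply: connect_trans h (connect1 h12).
  - by apply: connect_trans h (connect1 _); rewrite eadj_sym.
have := kill_sub kill hsub; rewrite Hpsi !inE connect0 (negbTE nc) /= subr0 mulr1.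
by move/scal1_eq0 => s00; rewrite s00 eqxx in s0.
Qed.

Lemma ecol_sub (A : {set edge n}) e : (ecol e <= span ecol A)%MS = connect (eadj A) (val e).1 (val e).2.
Proof. exact: sub_conn. Qed.

Lemma acyclic_indep (A : {set edge n}) : acyclic A = (rk ecol A == #|A|).
Proof.
apply/idP/idP.
- move=> ac; apply/eqP; apply: indep_of => e eA; rewrite ecol_sub.
  by move/forallP: ac => /(_ e); rewrite eA.
- move/eqP => h; apply/forallP => e; apply/implyP => eA.
  by rewrite -ecol_sub; apply: indep_notin.
Qed.

Lemma MK_rk (X : {set edge n}) : MK X = rk ecol X.
Proof.
apply/eqP; rewrite eqn_leq; apply/andP; split.
- apply/bigmax_leqP => A /andP[AX ac]; rewrite acyclic_indep in ac.
  rewrite -(eqP ac); exact: rk_mono.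
- have [B [BX hB hBX]] := basis_exists ecol X.
  rewrite -hBX hB /MK; apply: leq_bigmax_cond.
  by rewrite BX acyclic_indep hB eqxx.
Qed.

Lemma flat_span (F : {set edge n}) : flat (@MK n) F -> forall e, (ecol e <= span ecol F)%MS -> e \in F.
Proof.
move=> /forallP fl e he; apply/negPn/negP => eF.
move: (fl e); rewrite eF /= !MK_rk rk_setU1 he addn0 ltnn.
by [].
Qed.

Lemma span_flat (F : {set edge n}) : (forall e, (ecol e <= span ecol F)%MS -> e \in F) -> flat (@MK n) F.
Proof.
move=> H; apply/forallP => e; apply/implyP => eF.
rewrite !MK_rk rk_setU1.
have -> : ~~ (ecol e <= span ecol F)%MS by apply: contra eF; apply: H.
by rewrite addn1 ltnSn.
Qed.
End Graph.
Section Phi.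
Variables (K : fieldType) (m : nat) (sg : 'I_m.+1 -> 'I_m.+1).
Hypothesis sginj : injective sg.

Definition phi (y : 'I_m.+1) : 'rV[K]_m := \row_(i < m) (((i : nat) == y)%:R)%R.
Definition psiT (T : {set 'I_m.+1}) : 'cV[K]_m :=
  \col_(i < m) (([exists z in T, (sg z : nat) == i])%:R)%R.

Lemma phi_psi T y : (phi y *m psiT T = (((y != ord_max) && [exists z in T, sg z == y])%:R)%:M)%R.
Proof.
apply/matrixP => i j; rewrite !ord1 !mxE eqxx mulr1n.
case: (ltnP y m) => hy.
- rewrite (bigD1 (Ordinal hy)) //=.
  rewrite [X in (_ + X)%R]big1 ?addr0.
  + rewrite !mxE eqxx mul1r.
    have -> : (y != ord_max) = true.
      by apply/negP => /eqP ym; move: hy; rewrite ym /= ltnn.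
    by congr (_%:R)%R; apply: eq_existsb => z.
  + move=> k hk; rewrite !mxE.
    have -> : ((k : nat) == y) = false.
      by apply/negbTE; apply: contra hk => /eqP h; apply/eqP; apply: val_inj.
    by rewrite mul0r.
- have ym : y = ord_max by apply: val_inj; apply/eqP; rewrite eqn_leq hy -ltnS ltn_ord.
  rewrite ym eqxx /= big1 // => k _; rewrite !mxE.
  have -> : ((k : nat) == @ord_max m) = false by rewrite /= ltn_eqF.
  by rewrite mul0r.
Qed.

Lemma ex_inj (T : {set 'I_m.+1}) x : [exists z in T, sg z == sg x] = (x \in T).
Proof.
apply/existsP/idP => [[z /andP[zT /eqP /sginj <-]] //|xT].
by exists x; rewrite xT eqxx.
Qed.

Lemma Hp_phi : forall S : {set 'I_m.+1}, exists psi : 'cV[K]_m, exists s : K,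
  (s != 0)%R /\ forall x y, (((phi (sg x) - phi (sg y)) *m psi =
     (s * ((x \in S)%:R - (y \in S)%:R))%:M)%R).
Proof.
move=> S; case: (boolP [exists z in S, sg z == ord_max]) => hz.
- exists (psiT (~: S)), (-1)%R; split; first by rewrite oppr_eq0 oner_eq0.
  have key : forall x, ((sg x != ord_max) && [exists z in ~: S, sg z == sg x]) = (x \notin S).
    move=> x; rewrite ex_inj inE.
    case xS: (x \in S); first by rewrite andbF.
    rewrite andbT; apply/negP => /eqP hx.
    case/existsP: hz => z /andP[zS /eqP]; rewrite -hx => /sginj zx.
    by rewrite -zx zS in xS.
  move=> x y; rewrite mulmxBl !phi_psi !key -raddfB mulN1r opprB.
  by congr (_%:M)%R; case: (x \in S); case: (y \in S); rewrite /= ?subrr ?sub0r ?subr0.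
- exists (psiT S), 1%R; split; first exact: oner_neq0.
  have key : forall x, ((sg x != ord_max) && [exists z in S, sg z == sg x]) = (x \in S).
    move=> x; rewrite ex_inj.
    case xS: (x \in S); last by rewrite andbF.
    rewrite andbT; apply/negP => /eqP hx; case/negP: hz.
    by apply/existsP; exists x; rewrite xS hx eqxx.
  move=> x y; rewrite mulmxBl !phi_psi !key mul1r.
  by rewrite raddfB.
Qed.
End Phi.
Definition joins n (e : edge n) (x y : 'I_n) :=
  (((val e).1 == x) && ((val e).2 == y)) || (((val e).1 == y) && ((val e).2 == x)).

Lemma joins_sym n (e : edge n) x y : joins e x y = joins e y x.
Proof. by rewrite /joins orbC. Qed.

Lemma joins_self n (e : edge n) : joins e (val e).1 (val e).2.
Proof. by rewrite /joins !eqxx. Qed.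

Lemma joins_neq n (e : edge n) x y : joins e x y -> x != y.
Proof.
move: e => [[a b] h] /=; rewrite /joins /=.
case/orP => /andP[/eqP <- /eqP <-]; apply/negP => /eqP ab; move: h; rewrite ab ltnn //.
Qed.

Lemma joins_eq n (e : edge n) x y x' y' : joins e x y -> joins e x' y' ->
  ((x == x') && (y == y')) || ((x == y') && (y == x')).
Proof.
rewrite /joins; case/orP => /andP[/eqP <- /eqP <-]; case/orP => /andP[/eqP <- /eqP <-];
  by rewrite !eqxx ?orbT.
Qed.

Lemma edge_eq n (e e' : edge n) x y : joins e x y -> joins e' x y -> e = e'.
Proof.
move: e e' => [[a b] h] [[a' b'] h']; rewrite /joins /=.
case/orP => /andP[/eqP ha /eqP hb]; case/orP => /andP[/eqP ha' /eqP hb']; subst;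
  try by apply: val_inj.
- by move: (ltn_trans h h'); rewrite ltnn.
- by move: (ltn_trans h h'); rewrite ltnn.
Qed.

Lemma exists_edge n (x y : 'I_n) : x != y -> exists e : edge n, joins e x y.
Proof.
move=> xy; case: (ltngtP x y) => h.
- by exists (exist _ (x, y) h); rewrite /joins /= !eqxx.
- by exists (exist _ (y, x) h); rewrite /joins /= !eqxx orbT.
- by case/negP: xy; apply/eqP; apply: val_inj.
Qed.

Lemma joins_adj n (A : {set edge n}) e x y : e \in A -> joins e x y -> eadj A x y.
Proof. by move=> eA h; apply/existsP; exists e; rewrite eA. Qed.

Lemma joins_conn n (A : {set edge n}) g y z : joins g y z -> connect (eadj A) y z ->
  connect (eadj A) (val g).1 (val g).2.
Proof.
rewrite /joins; case/orP => /andP[/eqP -> /eqP ->] // h.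
by rewrite (sym_connect_sym (@eadj_sym n A)).
Qed.

Lemma conn_joins n (A : {set edge n}) g y z : joins g y z ->
  connect (eadj A) (val g).1 (val g).2 -> connect (eadj A) y z.
Proof.
rewrite /joins; case/orP => /andP[/eqP -> /eqP ->] // h.
by rewrite (sym_connect_sym (@eadj_sym n A)).
Qed.

Lemma card3_le (T : finType) (L : {set T}) a b c :
  a \in L -> b \in L -> c \in L -> a != b -> a != c -> b != c -> 3 <= #|L|.
Proof.
move=> aL bL cL ab ac bc.
have -> : 3 = #|c |: [set a; b]| by rewrite cardsU1 cards2 !inE ab (eq_sym c a) (negbTE ac) (eq_sym c b) (negbTE bc).
apply: subset_leq_card; apply/subsetP => x; rewrite !inE => /orP[|/orP[]] /eqP ->; done.
Qed.

Lemma first_step n (A : {set edge n}) x y : connect (eadj A) x y -> x != y ->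
  exists2 h, h \in A & exists z, joins h x z.
Proof.
case/connectP => [[|z s]] /= => [_ -> |]; first by rewrite eqxx.
by case/andP => /existsP[h /andP[hA hj]] _ _ _; exists h => //; exists z.
Qed.

Section Comb.
Variables (K : fieldType) (n m : nat) (p : 'I_n -> 'rV[K]_m).
Hypothesis Hp : forall S : {set 'I_n}, exists psi : 'cV[K]_m, exists s : K,
  (s != 0)%R /\ forall x y, ((p x - p y) *m psi = (s * ((x \in S)%:R - (y \in S)%:R))%:M)%R.

Lemma flat_conn (F : {set edge n}) g : flat (@MK n) F ->
  connect (eadj F) (val g).1 (val g).2 -> g \in F.
Proof. by move=> fl h; apply: (flat_span Hp fl); rewrite (ecol_sub Hp). Qed.

Lemma line_disj (L : {set edge n}) e e' x y z : two_point_line (@MK n) L ->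
  e \in L -> e' \in L -> e != e' -> joins e x y -> joins e' x z -> False.
Proof.
case/and3P => fl _ /eqP cL eL e'L ne h1 h2.
have yz : y != z by apply/negP => /eqP yz; subst z; case/negP: ne; apply/eqP; exact: edge_eq h1 h2.
have [g hg] := exists_edge yz.
have gL : g \in L.
  apply: flat_conn fl _; apply: joins_conn hg _.
  apply: (connect_trans (y := x)); apply: connect1.
  - by apply: (joins_adj eL); rewrite joins_sym.
  - exact: (joins_adj e'L h2).
have ge : g != e.
  apply/negP => /eqP ge; subst g; case/orP: (joins_eq hg h1) => /andP[/eqP yx /eqP zy].
  - by move: (joins_neq h1); rewrite yx eqxx.
  - by move: (joins_neq h2); rewrite zy eqxx.
have ge' : g != e'.
  apply/negP => /eqP ge2; subst g; case/orP: (joins_eq hg h2) => /andP[/eqP yx /eqP zy].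
  - by move: (joins_neq h1); rewrite yx eqxx.
  - by move: yz; rewrite yx eqxx.
have eg : e != g by rewrite eq_sym.
have e'g : e' != g by rewrite eq_sym.
by have := card3_le eL e'L gL ne eg e'g; rewrite cL.
Qed.

Lemma circuit_cover (C : {set edge n}) g x y : circuit (@MK n) C -> g \in C -> joins g x y ->
  exists2 h, h \in C :\ g & exists z, joins h x z.
Proof.
case/andP => hlt /forallP hpr gC hj.
have hD : (C :\ g) \proper C by apply: properD1.
move: (hpr (C :\ g)); rewrite hD /= => /eqP hD'.
rewrite !(MK_rk Hp) in hlt hD'.
have hsub : (ecol p g <= span (ecol p) (C :\ g))%MS.
  apply/negPn/negP => hn; move: hlt; rewrite (rk_setD1 _ gC) hn hD' (cardsD1 g C) gC.
  by rewrite addn1 add1n ltnn.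
rewrite (ecol_sub Hp) in hsub.
apply: first_step; [exact: conn_joins hj hsub | exact: joins_neq hj].
Qed.
End Comb.
Section Config.
Variables (K : fieldType) (n m : nat) (p : 'I_n -> 'rV[K]_m).
Hypothesis Hp : forall S : {set 'I_n}, exists psi : 'cV[K]_m, exists s : K,
  (s != 0)%R /\ forall x y, ((p x - p y) *m psi = (s * ((x \in S)%:R - (y \in S)%:R))%:M)%R.

Lemma disj_ends (L : {set edge n}) e e' x y u v : two_point_line (@MK n) L ->
  e \in L -> e' \in L -> e != e' -> joins e x y -> joins e' u v ->
  [&& x != u, x != v, y != u & y != v].
Proof.
move=> tl eL e'L ne h1 h2; apply/and4P; split; apply/negP => /eqP eq.
- by rewrite eq in h1; exact: (line_disj Hp tl eL e'L ne h1 h2).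
- by rewrite eq in h1; rewrite joins_sym in h2; exact: (line_disj Hp tl eL e'L ne h1 h2).
- by rewrite joins_sym eq in h1; exact: (line_disj Hp tl eL e'L ne h1 h2).
- by rewrite joins_sym eq in h1; rewrite joins_sym in h2; exact: (line_disj Hp tl eL e'L ne h1 h2).
Qed.

Lemma two_ends (e : edge n) x y : (exists z, joins e x z) -> (exists w, joins e y w) -> x != y -> joins e x y.
Proof.
case=> z' hz [w' hw] xy; case/orP: (joins_eq hz hw) => /andP[/eqP h1 /eqP h2].
- by rewrite h1 eqxx in xy.
- by rewrite h2 in hz.
Qed.

Lemma endp_of (e : edge n) a b x : joins e a b -> (exists z, joins e x z) -> (x == a) || (x == b).
Proof.
move=> hab [z hz]; case/orP: (joins_eq hz hab) => /andP[h _]; by rewrite h ?orbT.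
Qed.

Lemma config (L1 L2 : {set edge n}) : two_point_line (@MK n) L1 -> two_point_line (@MK n) L2 ->
  circuit (@MK n) (L1 :|: L2) -> #|L1 :|: L2| = 4 ->
  exists a b c d : 'I_n, exists e1 e2 e3 e4 : edge n,
  [/\ [&& a != b, a != c, a != d, b != c, b != d & c != d],
      L1 = [set e1; e2], L2 = [set e3; e4] &
      [/\ joins e1 a b, joins e2 c d, joins e3 a c & joins e4 b d]].
Proof.
move=> t1 t2 hC h4.
have := t1; case/and3P => _ _ /cards2P [e1 [e2 [ne12 hL1]]].
have := t2; case/and3P => _ _ /cards2P [f1 [f2 [nf12 hL2]]].
have c1 : #|L1| = 2 by rewrite hL1 cards2 ne12.
have c2 : #|L2| = 2 by rewrite hL2 cards2 nf12.
have dis : L1 :&: L2 = set0.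
  apply/eqP; rewrite -cards_eq0; apply/eqP.
  by move: (cardsUI L1 L2); rewrite h4 c1 c2 => /eqP; rewrite -[4]/(4 + 0) eqn_add2l => /eqP.
have notL1 : forall f, f \in L2 -> f \notin L1.
  move=> f fL2; apply/negP => fL1.
  have : f \in L1 :&: L2 by rewrite inE fL1 fL2.
  by rewrite dis inE.
have e1L : e1 \in L1 by rewrite hL1 !inE eqxx.
have e2L : e2 \in L1 by rewrite hL1 !inE eqxx orbT.
have f1L : f1 \in L2 by rewrite hL2 !inE eqxx.
have f2L : f2 \in L2 by rewrite hL2 !inE eqxx orbT.
have inL1 : forall h, h \in L1 -> (h == e1) || (h == e2) by move=> h; rewrite hL1 !inE.
have inL2 : forall h, h \in L2 -> (h == f1) || (h == f2) by move=> h; rewrite hL2 !inE.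
have cover : forall f x y, f \in L2 -> joins f x y ->
    (exists z, joins e1 x z) \/ (exists z, joins e2 x z).
  move=> f x y fL2 hj.
  have fC : f \in L1 :|: L2 by rewrite inE fL2 orbT.
  have [h] := circuit_cover Hp hC fC hj; rewrite !inE => /andP[hf /orP[hL|hL]] [z hz].
  - by case/orP: (inL1 h hL) => /eqP ?; subst h; [left|right]; exists z.
  - exfalso; have ff : f != h by rewrite eq_sym.
    have := disj_ends t2 fL2 hL ff hj hz; by rewrite eqxx.
have notj : forall f x y, f \in L2 -> joins f x y -> forall e, e \in L1 -> joins e x y -> False.
  move=> f x y fL2 hf e eL he; have := edge_eq he hf => ef; subst e.
  by move: (notL1 f fL2); rewrite eL.
move: (joins_self f1); set x1 := (val f1).1; set y1 := (val f1).2 => hj1.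
have [a [c [ja jc hf1]]] : exists a c, [/\ exists z, joins e1 a z, exists z, joins e2 c z & joins f1 a c].
  case: (cover f1 x1 y1 f1L hj1) => [hx|hx];
  case: (cover f1 y1 x1 f1L (etrans (joins_sym _ _ _) hj1)) => [hy|hy].
  - by exfalso; apply: (notj f1 x1 y1 f1L hj1 e1 e1L); apply: two_ends hx hy (joins_neq hj1).
  - by exists x1, y1.
  - by exists y1, x1; rewrite joins_sym.
  - by exfalso; apply: (notj f1 x1 y1 f1L hj1 e2 e2L); apply: two_ends hx hy (joins_neq hj1).
case: ja => b hb; case: jc => d hd.
have hd4 := disj_ends t1 e1L e2L ne12 hb hd.
move: (joins_self f2); set x2 := (val f2).1; set y2 := (val f2).2 => hj2.
have bd : forall x y, joins f2 x y -> (x == b) || (x == d).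
  move=> x y hxy; have := disj_ends t2 f1L f2L nf12 hf1 hxy; case/and4P => ax _ cx _.
  case: (cover f2 x y f2L hxy) => hz.
  - case/orP: (endp_of hb hz) => /eqP xe; first by rewrite xe eqxx in ax.
    by rewrite xe eqxx.
  - case/orP: (endp_of hd hz) => /eqP xe; first by rewrite xe eqxx in cx.
    by rewrite xe eqxx orbT.
have hf2 : joins f2 b d.
  have n2 := joins_neq hj2.
  case/orP: (bd _ _ hj2) => /eqP ex; case/orP: (bd _ _ (etrans (joins_sym _ _ _) hj2)) => /eqP ey.
  - by rewrite ex ey eqxx in n2.
  - by rewrite -ex -ey.
  - by rewrite joins_sym -ex -ey.
  - by rewrite ex ey eqxx in n2.
exists a, b, c, d, e1, e2, f1, f2; split => //.
by rewrite (joins_neq hb) (joins_neq hd) /=; case/and4P: hd4 => -> -> -> ->.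
Qed.
End Config.
Lemma K4 (K : fieldType) (two0 : ((2%:R : K) != 0)%R) (al be ga de : bool) :
  ((al%:R - be%:R) - (ga%:R - de%:R) = 0 :> K)%R -> (al + de == be + ga)%N.
Proof.
have two' : ((1 + 1 : K) != 0)%R by rewrite -mulr2n.
have o1 : ((1 : K) != 0)%R := oner_neq0 K.
case: al; case: be; case: ga; case: de => //=;
  rewrite ?mulr1n ?mulr0n ?subr0 ?sub0r ?opprK ?subrr ?opprB ?addrK ?subrK ?sub0r ?oppr0;
  move=> h; exfalso; move: h; move/eqP; rewrite ?add0r ?addr0 -?opprD ?oppr_eq0 ?(negbTE o1) ?(negbTE two') //.
Qed.

Lemma vswap (V : zmodType) (a b c d : V) : ((a - b) - (c - d) = (a - c) - (b - d))%R.
Proof. by rewrite !opprB addrACA [RHS]addrACA; congr (_ + _)%R; exact: addrC. Qed.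
Section Cut.
Variables (K : fieldType) (n m : nat) (p : 'I_n -> 'rV[K]_m).
Hypothesis Hp : forall S : {set 'I_n}, exists psi : 'cV[K]_m, exists s : K,
  (s != 0)%R /\ forall x y, ((p x - p y) *m psi = (s * ((x \in S)%:R - (y \in S)%:R))%:M)%R.
Hypothesis two0 : ((2%:R : K) != 0)%R.
Variables (a b c d : 'I_n) (e1 e2 e3 e4 : edge n) (L1 L2 : {set edge n}).
Hypotheses (hL1 : L1 = [set e1; e2]) (hL2 : L2 = [set e3; e4]).
Hypotheses (j1 : joins e1 a b) (j2 : joins e2 c d) (j3 : joins e3 a c) (j4 : joins e4 b d).

Definition vv := ((p a - p b) - (p c - p d))%R.

Lemma comp_closed (F : {set edge n}) x : forall e, e \in F ->
  ((val e).1 \in [set y | connect (eadj F) x y]) = ((val e).2 \in [set y | connect (eadj F) x y]).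
Proof.
move=> e eF; rewrite !inE.
have h12 : eadj F (val e).1 (val e).2 by apply/existsP; exists e; rewrite eF !eqxx.
apply/idP/idP => h.
- by apply: connect_trans h (connect1 h12).
- by apply: connect_trans h (connect1 _); rewrite eadj_sym.
Qed.

Lemma vpsi (F : {set edge n}) (S : {set 'I_n}) :
  (forall e, e \in F -> ((val e).1 \in S) = ((val e).2 \in S)) ->
  (vv <= span (ecol p) F)%MS -> ((a \in S) + (d \in S) == (b \in S) + (c \in S))%N.
Proof.
move=> cl hv; case: (Hp S) => psi [s [s0 Hpsi]].
have kill := cut_kill Hpsi cl.
have := kill_sub kill hv; rewrite /vv mulmxBl !Hpsi -raddfB => /scal1_eq0.
rewrite -mulrBr => /eqP; rewrite mulf_eq0 (negbTE s0) /= => /eqP.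
exact: K4.
Qed.

Lemma conn_in (F : {set edge n}) e x y : flat (@MK n) F -> joins e x y ->
  connect (eadj F) x y -> e \in F.
Proof. by move=> fl hj hc; apply: (flat_conn Hp fl); apply: joins_conn hj hc. Qed.

Lemma v_in (F : {set edge n}) : flat (@MK n) F ->
  ((L1 \subset F) || (L2 \subset F)) = (vv <= span (ecol p) F)%MS.
Proof.
move=> fl; apply/idP/idP.
- have hs : forall e x y, e \in F -> joins e x y -> ((p x - p y)%R <= span (ecol p) F)%MS.
    by move=> e x y eF hj; apply: conn_sub; apply: connect1; apply: joins_adj eF hj.
  case/orP => hsub.
  + have e1F : e1 \in F by apply: (subsetP hsub); rewrite hL1 !inE eqxx.
    have e2F : e2 \in F by apply: (subsetP hsub); rewrite hL1 !inE eqxx orbT.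
    rewrite /vv addmx_sub ?eqmx_opp //; [exact: hs e1F j1 | exact: hs e2F j2].
  + have e3F : e3 \in F by apply: (subsetP hsub); rewrite hL2 !inE eqxx.
    have e4F : e4 \in F by apply: (subsetP hsub); rewrite hL2 !inE eqxx orbT.
    rewrite /vv vswap addmx_sub ?eqmx_opp //; [exact: hs e3F j3 | exact: hs e4F j4].
- move=> hv.
  pose C x := [set y | connect (eadj F) x y].
  have csym : forall x y, connect (eadj F) x y = connect (eadj F) y x.
    by move=> x y; rewrite (sym_connect_sym (@eadj_sym n F)).
  have L1F : connect (eadj F) a b -> connect (eadj F) c d -> L1 \subset F.
    move=> hab hcd; apply/subsetP => e; rewrite hL1 !inE => /orP[] /eqP ->.
    + exact: conn_in fl j1 hab.
    + exact: conn_in fl j2 hcd.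
  have L2F : connect (eadj F) a c -> connect (eadj F) b d -> L2 \subset F.
    move=> hac hbd; apply/subsetP => e; rewrite hL2 !inE => /orP[] /eqP ->.
    + exact: conn_in fl j3 hac.
    + exact: conn_in fl j4 hbd.
  have hd := vpsi (comp_closed d) hv; rewrite !inE connect0 in hd.
  have ha := vpsi (comp_closed a) hv; rewrite !inE connect0 in ha.
  move: hd ha; rewrite !(csym d).
  case hA : (connect (eadj F) a d); case hB : (connect (eadj F) b d);
    case hC : (connect (eadj F) c d) => //= hd.
  + rewrite L1F //; first by apply: connect_trans hA _; rewrite csym.
  + have nab : connect (eadj F) a b = false.
      by apply/negbTE/negP => hab; move: hA; rewrite (connect_trans hab hB).
    rewrite nab /= add0n add1n => /eqP hac.
    by rewrite L2F ?orbT //; move: hac; case: (connect (eadj F) a c).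
  + have nac : connect (eadj F) a c = false.
      by apply/negbTE/negP => hac; move: hA; rewrite (connect_trans hac hC).
    rewrite nac /= addn0 => /eqP hab.
    by rewrite L1F //; move: hab; case: (connect (eadj F) a b).
Qed.

Definition colN (o : option (edge n)) : 'rV[K]_m :=
  if o is Some e then ecol p e else vv.

Definition rN0 := rk colN.

Lemma memS (Z : {set edge n}) e : (Some e \in Some @: Z) = (e \in Z).
Proof. by apply: mem_imset; move=> x y [->]. Qed.

Lemma memN (Z : {set edge n}) : (None \in Some @: Z) = false.
Proof. by apply/negbTE/imsetP => -[x _]. Qed.

Lemma span_colN (Z : {set edge n}) : span colN (Some @: Z) = span (ecol p) Z.
Proof. by rewrite /span big_imset //=; move=> x y _ _ [->]. Qed.

Lemma rN0_S (Z : {set edge n}) : rN0 (Some @: Z) = MK Z.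
Proof. by rewrite /rN0 /rk span_colN (MK_rk Hp). Qed.

Lemma rN0_N (Z : {set edge n}) : rN0 (None |: Some @: Z) = MK Z + ~~ (vv <= span (ecol p) Z)%MS.
Proof. by rewrite /rN0 rk_setU1 /= -rN0_S span_colN. Qed.

Definition Fc := [set F | flat (@MK n) F && ((L1 \subset F) || (L2 \subset F))].

Lemma ext_rN0 : extension_of_cut (@MK n) Fc rN0.
Proof.
split; first exact: rk_is_rank.
- exact: rN0_S.
- move=> F fl; rewrite inE fl /= (v_in fl) rN0_N rN0_S.
  by case: (vv <= _)%MS; rewrite /= ?addn0 ?addn1 ?eqxx // eqn_leq ltnn.
Qed.

Section Generic.
Variable rho : {set option (edge n)} -> nat.
Hypothesis rrank : is_rank rho.
Hypothesis rS : forall Z : {set edge n}, rho (Some @: Z) = MK Z.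

Lemma rho_bounds (Z : {set edge n}) : MK Z <= rho (None |: Some @: Z) <= MK Z + 1.
Proof.
case: rrank => hc hm hs; rewrite -rS; apply/andP; split.
- by apply: hm; exact: subsetUr.
- have h2 := hs [set None] (Some @: Z).
  have h1 := hc [set None]; rewrite cards1 in h1.
  apply: leq_trans (leq_addr (rho ([set None] :&: Some @: Z)) _) _.
  apply: leq_trans h2 _; by rewrite addnC leq_add2l.
Qed.

Lemma rho_cl (X F : {set edge n}) : X \subset F -> MK X = MK F ->
  rho (None |: Some @: X) = rho (None |: Some @: F).
Proof.
case: rrank => hc hm hs XF hXF; apply/eqP; rewrite eqn_leq; apply/andP; split.
- apply: hm; apply: setUS; exact: imsetS.
- have := hs (None |: Some @: X) (Some @: F).
  have -> : (None |: Some @: X) :|: Some @: F = None |: Some @: F.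
    by rewrite -setUA; congr (_ :|: _); apply/setUidPr; exact: imsetS.
  have -> : (None |: Some @: X) :&: Some @: F = Some @: X.
    apply/setP => -[e|]; rewrite !inE ?memS ?memN //=.
    by case eX: (e \in X); rewrite ?(subsetP XF e eX).
  by rewrite !rS hXF leq_add2r.
Qed.
End Generic.

Lemma uniq_ext rN : extension_of_cut (@MK n) Fc rN -> forall Y, rN Y = rN0 Y.
Proof.
case=> rrank rS rF Y.
have rrank0 : is_rank rN0 := rk_is_rank colN.
pose X := [set e | Some e \in Y].
have hY : Y = (if None \in Y then None |: Some @: X else Some @: X).
  apply/setP => -[e|]; case: ifP => hN; rewrite ?inE ?memS ?memN ?inE //=.
rewrite hY; case: ifP => _; last by rewrite rS rN0_S.
pose F := [set e | (ecol p e <= span (ecol p) X)%MS].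
have XF : X \subset F by apply/subsetP => e eX; rewrite inE; apply: mem_span.
have spF : (span (ecol p) F <= span (ecol p) X)%MS by apply/span_subP => e; rewrite inE.
have flF : flat (@MK n) F.
  apply: (span_flat Hp) => e he; rewrite inE; exact: submx_trans he spF.
have hXF : MK X = MK F.
  rewrite !(MK_rk Hp); apply/eqP; rewrite eqn_leq rk_mono //=; exact: mxrankS.
rewrite (rho_cl rrank rS XF hXF) (rho_cl rrank0 rN0_S XF hXF).
have q1 := rF F flF; case: ext_rN0 => _ _ h0; have q2 := h0 F flF.
rewrite rS in q1; rewrite rN0_S in q2; rewrite q1 in q2.
have hu := rho_bounds rrank rS F; have hw := rho_bounds rrank0 rN0_S F.
move: q2 hu hw; set u := rN (None |: Some @: F); set w := rN0 (None |: Some @: F).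
move=> q2 /andP[h1 h2] /andP[h3 h4].
case: (eqVneq u (MK F)) q2 => hu'.
- by rewrite hu' => /esym/eqP ->.
- by move=> /esym/eqP hw'; lia.
Qed.

Lemma set0_flat : flat (@MK n) set0.
Proof.
apply: (span_flat Hp) => e; rewrite (ecol_sub Hp) => hc.
have [h] := first_step hc (joins_neq (joins_self e)); by rewrite inE.
Qed.

Lemma proper_cut : proper_modular_cut (@MK n) Fc.
Proof.
split; last first.
  exists set0; rewrite set0_flat inE set0_flat /= !subset0 hL1 hL2.
  by rewrite -!cards_eq0 !cards2.
split.
- by move=> F; rewrite inE => /andP[].
- move=> F F'; rewrite !inE => /andP[_ h] fl' FF'; rewrite fl' /=.
  by case/orP: h => h; rewrite (subset_trans h FF') ?orbT.
- move=> F1 F2; rewrite !inE => /andP[fl1 h1] /andP[fl2 h2] hmod.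
  rewrite (v_in fl1) in h1; rewrite (v_in fl2) in h2.
  have fl12 : flat (@MK n) (F1 :&: F2).
    apply: (span_flat Hp) => e he; rewrite inE; apply/andP; split.
    + apply: (flat_span Hp fl1); apply: submx_trans he _; apply: span_sub; exact: subsetIl.
    + apply: (flat_span Hp fl2); apply: submx_trans he _; apply: span_sub; exact: subsetIr.
  rewrite fl12 /= (v_in fl12).
  rewrite !(MK_rk Hp) /rk (eqmxP (span_setU _ F1 F2)) in hmod.
  have hW : (span (ecol p) (F1 :&: F2) <= span (ecol p) F1 :&: span (ecol p) F2)%MS.
    by rewrite sub_capmx !span_sub ?subsetIl ?subsetIr.
  have hsc := mxrank_sum_cap (span (ecol p) F1) (span (ecol p) F2).
  have := (mxrank_leqif_sup hW).2.
  have -> : \rank (span (ecol p) (F1 :&: F2)) = \rank (span (ecol p) F1 :&: span (ecol p) F2).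
    by move: hsc; rewrite hmod => /addnI.
  rewrite eqxx => /esym hc.
  apply: submx_trans hc; by rewrite sub_capmx h1 h2.
Qed.
End Cut.
Lemma perm_ext (T : finType) (x0 : T) (xs ys : seq T) : uniq xs -> uniq ys -> size xs = size ys ->
  exists s : {perm T}, forall i, i < size xs -> s (nth x0 xs i) = nth x0 ys i.
Proof.
elim: xs ys => [|x xs IH] [|y ys] //=.
- by move=> _ _ _; exists 1%g.
- case/andP => xn ux /andP[yn uy] [hs].
  have [s hsp] := IH ys ux uy hs.
  exists (s * tperm (s x) y)%g => -[_|k hk] /=; rewrite permM.
  + exact: tpermL.
  + rewrite hsp // tpermD //.
    * apply/negP => /eqP h; move: (hsp k hk); rewrite -h => /perm_inj h2.
      by move: xn; rewrite -h2 mem_nth.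
    * apply/negP => /eqP h; move: yn; rewrite h mem_nth //; by rewrite -hs.
Qed.

Section Bij.
Variables (m : nat) (sg : {perm 'I_m.+1}).

Definition mkE n (x y : 'I_n) : option (edge n) :=
  if insub (x, y) is Some e then Some e else insub (y, x).

Lemma mkE_joins n (x y : 'I_n) : x != y -> exists2 e, mkE x y = Some e & joins e x y.
Proof.
move=> xy; rewrite /mkE; case: insubP => [e _ he | hn].
  by exists e => //; rewrite /joins he /= !eqxx.
case: insubP => [e _ he | hn'].
  by exists e => //; rewrite /joins he /= !eqxx orbT.
exfalso; move: hn hn' xy => /=; case: (ltngtP x y) => // h _ _.
by rewrite (val_inj h) eqxx.
Qed.

Lemma mkE_some n (x y : 'I_n) e : mkE x y = Some e -> joins e x y.
Proof.
rewrite /mkE; case: insubP => [e' _ he [<-] | _]; first by rewrite /joins he /= !eqxx.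
by case: insubP => [e' _ he [<-] | _] //; rewrite /joins he /= !eqxx orbT.
Qed.

Definition gmap (c : colT m) : option (edge m.+1) :=
  match c with
  | inl i => mkE (sg^-1 (lift ord_max i))%g (sg^-1 ord_max)%g
  | inr (inl e') => mkE (sg^-1 (lift ord_max (val e').1))%g (sg^-1 (lift ord_max (val e').2))%g
  | inr (inr _) => None
  end.

Lemma sgi_neq (x y : 'I_m.+1) : x != y -> (sg^-1 x)%g != (sg^-1 y)%g.
Proof. by apply: contra => /eqP /perm_inj ->. Qed.

Lemma lift_neq_max (i : 'I_m) : lift ord_max i != ord_max.
Proof. by rewrite eq_sym neq_lift. Qed.

Lemma edge_lift_neq (e' : edge m) : lift ord_max (val e').1 != lift ord_max (val e').2.
Proof. by apply: contra (joins_neq (joins_self e')) => /eqP /lift_inj ->. Qed.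

Lemma gmap_inl i : exists2 e, gmap (inl i) = Some e & joins e (sg^-1 (lift ord_max i))%g (sg^-1 ord_max)%g.
Proof. by apply: mkE_joins; apply: sgi_neq; apply: lift_neq_max. Qed.

Lemma gmap_inrl e' : exists2 e, gmap (inr (inl e')) = Some e &
  joins e (sg^-1 (lift ord_max (val e').1))%g (sg^-1 (lift ord_max (val e').2))%g.
Proof. by apply: mkE_joins; apply: sgi_neq; apply: edge_lift_neq. Qed.

Lemma joins_sg (e : edge m.+1) x y x' y' :
  joins e (sg^-1 x)%g (sg^-1 y)%g -> joins e (sg^-1 x')%g (sg^-1 y')%g ->
  ((x == x') && (y == y')) || ((x == y') && (y == x')).
Proof.
move=> h1 h2; have := joins_eq h1 h2.
by rewrite !(inj_eq (@perm_inj _ (sg^-1)%g)).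
Qed.

Lemma gmap_inj : injective gmap.
Proof.
move=> c1 c2.
have H : forall c, c != inr (inr tt) -> exists x y, exists2 e, gmap c = Some e & joins e (sg^-1 x)%g (sg^-1 y)%g.
  move=> [i|[e'|[]]] // _.
  - by have [e h1 h2] := gmap_inl i; exists (lift ord_max i), ord_max, e.
  - by have [e h1 h2] := gmap_inrl e'; exists (lift ord_max (val e').1), (lift ord_max (val e').2), e.
case: (eqVneq c1 (inr (inr tt))) => [->|n1]; case: (eqVneq c2 (inr (inr tt))) => [->|n2] //.
- by have [x [y [e h _]]] := H c2 n2; rewrite h.
- by have [x [y [e h _]]] := H c1 n1; rewrite h.
move: n1 n2; case: c1 => [i|[e'|[]]] // _; case: c2 => [j|[f'|[]]] // _.
- have [e h1 j1] := gmap_inl i; have [f h2 j2] := gmap_inl j.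
  rewrite h1 h2 => -[ef]; subst f.
  case/orP: (joins_sg j1 j2) => /andP[/eqP h _].
  + by rewrite (lift_inj h).
  + by move: (lift_neq_max i); rewrite h eqxx.
- have [e h1 j1] := gmap_inl i; have [f h2 j2] := gmap_inrl f'.
  rewrite h1 h2 => -[ef]; subst f.
  case/orP: (joins_sg j1 j2) => /andP[_ /eqP h]; by move: h; move/esym/eqP; rewrite (negbTE (lift_neq_max _)).
- have [e h1 j1] := gmap_inrl e'; have [f h2 j2] := gmap_inl j.
  rewrite h1 h2 => -[ef]; subst f.
  case/orP: (joins_sg j1 j2) => /andP[/eqP h1' /eqP h2'].
  + by move: (lift_neq_max (val e').2); rewrite h2' eqxx.
  + by move: (lift_neq_max (val e').1); rewrite h1' eqxx.
- have [e h1 j1] := gmap_inrl e'; have [f h2 j2] := gmap_inrl f'.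
  rewrite h1 h2 => -[ef]; subst f.
  congr (inr (inl _)).
  case/orP: (joins_sg j1 j2) => /andP[/eqP /lift_inj ha /eqP /lift_inj hb].
  + by apply: (edge_eq (joins_self e')); rewrite ha hb joins_self.
  + by apply: (edge_eq (joins_self e')); rewrite ha hb joins_sym joins_self.
Qed.

Lemma gmap_surj y : exists c, gmap c = y.
Proof.
case: y => [e|]; last by exists (inr (inr tt)).
have sne : sg (val e).1 != sg (val e).2.
  by rewrite (inj_eq (@perm_inj _ sg)); apply: joins_neq (joins_self e).
have fin : forall e'', joins e'' (sg^-1 (sg (val e).1))%g (sg^-1 (sg (val e).2))%g ->
  e'' = e.
  by move=> e''; rewrite !permK => h; apply: edge_eq h (joins_self e).
have [i hx|hx] := unliftP ord_max (sg (val e).1);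
  have [j hy|hy] := unliftP ord_max (sg (val e).2).
- have ij : i != j by apply: contra sne => /eqP ij; rewrite hx hy ij.
  have [e' je'] := exists_edge ij.
  exists (inr (inl e')); have [e'' h1 h2] := gmap_inrl e'; rewrite h1.
  congr Some; rewrite /joins in je'.
  case/orP: je' => /andP[/eqP ha /eqP hb]; rewrite ha hb in h2.
  + by apply: fin; rewrite hx hy.
  + by apply: fin; rewrite hx hy joins_sym.
- exists (inl i); have [e'' h1 h2] := gmap_inl i; rewrite h1; congr Some.
  by apply: fin; rewrite hx hy.
- exists (inl j); have [e'' h1 h2] := gmap_inl j; rewrite h1; congr Some.
  by apply: fin; rewrite hx hy joins_sym.
- by move: sne; rewrite hx hy eqxx.
Qed.

Lemma gmap_bij : bijective gmap.
Proof.
apply: inj_card_bij; first exact: gmap_inj.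
have : #|[set: option (edge m.+1)]| <= #|codom gmap|.
  apply: subset_leq_card; apply/subsetP => y _.
  by have [c <-] := gmap_surj y; apply: codom_f.
by rewrite cardsT (card_codom gmap_inj).
Qed.
End Bij.
Section Final.
Variables (K : fieldType) (r : nat) (sg : {perm 'I_r.+2}) (a b c d : 'I_r.+2).
Hypotheses (ha : (sg a : nat) = 0) (hb : (sg b : nat) = 1) (hc : (sg c : nat) = 2)
  (hd : sg d = ord_max).
Hypothesis hr : 2 <= r.

Definition pp (x : 'I_r.+2) : 'rV[K]_r.+1 := phi K (sg x).

Lemma phi_max (j : 'I_r.+1) : phi K (@ord_max r.+1) ord0 j = 0%R.
Proof. by rewrite !mxE /= ltn_eqF. Qed.

Lemma phi_lift (i j : 'I_r.+1) : phi K (lift ord_max i) ord0 j = ((j == i)%:R)%R.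
Proof. by rewrite !mxE /= /bump leqNgt ltn_ord /= add0n. Qed.

Lemma nmax (j : 'I_r.+1) : ((j : nat) == @ord_max r.+1) = false.
Proof. by rewrite /= ltn_eqF. Qed.

Lemma nlift (i j : 'I_r.+1) : ((j : nat) == lift ord_max i) = (j == i).
Proof. by rewrite /= /bump leqNgt ltn_ord /= add0n. Qed.

Lemma intr_natb (k : nat) : (((k%:R : int)%:~R : K) = k%:R)%R.
Proof. by rewrite natz. Qed.

Lemma ecol_joins (e : edge r.+2) x y : joins e x y ->
  ecol pp e = (pp x - pp y)%R \/ ecol pp e = (- (pp x - pp y))%R.
Proof.
rewrite /joins /ecol; case/orP => /andP[/eqP -> /eqP ->]; [left | right] => //.
by rewrite opprB.
Qed.

Lemma col_rel (cc : colT r.+1) :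
  (<<trmx (colK K cc)>> = <<colN pp a b c d (gmap sg cc)>>)%MS.
Proof.
apply: eq_genmx.
have H : forall (u v : 'rV[K]_r.+1), u = v \/ u = (- v)%R -> (v :=: u)%MS.
  by move=> u v [->|->]; [exact: eqmx_refl | exact: eqmx_sym (eqmx_opp _)].
case: cc => [i|[e'|[]]].
- have [e -> je] := gmap_inl sg i; apply: H => /=.
  case: (ecol_joins je) => ->; [left|right; congr (- _)%R];
    by apply/matrixP => i0 j; rewrite !mxE /pp !permKV nmax nlift subr0 intr_natb.
- have [e -> je] := gmap_inrl sg e'; apply: H => /=.
  case: (ecol_joins je) => ->; [left|right; congr (- _)%R];
    by apply/matrixP => i0 j; rewrite !mxE /pp !permKV !nlift intrB !intr_natb.
- apply: H; left; apply/matrixP => i0 j; rewrite /= /vv /pp !mxE hd nmax ha hb hc subr0.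
  case: (ltngtP j 2) => hj.
  + move: hj; rewrite ltnS leq_eqVlt ltnS leqn0 => /orP[] /eqP ->;
      by rewrite /= ?mulr1n ?mulr0n ?subr0 ?sub0r ?mulr1z ?mulrN1z.
  + have j0 : ((j : nat) == 0%N) = false by apply/eqP; lia.
    have j1 : ((j : nat) == 1%N) = false by apply/eqP; lia.
    have j3 : ((j : nat) == 2%N) = false by apply/eqP; lia.
    by rewrite j0 j1 /= !subr0 mulr0z.
  + by rewrite hj /= ?mulr1n ?mulr0n ?subr0 ?sub0r ?mulr1z ?mulrN1z.
Qed.

Lemma vrank_eq (f : option (edge r.+2) -> colT r.+1) :
  cancel f (gmap sg) -> cancel (gmap sg) f ->
  forall Y : {set option (edge r.+2)}, vrank (@colK K r.+1) (f @: Y) = rN0 pp a b c d Y.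
Proof.
move=> fK gK Y; rewrite /vrank /rN0 /rk /span.
rewrite big_imset /=; last by move=> x y _ _; apply: (can_inj fK).
by congr (mxrank _); apply: eq_bigr => y _; rewrite col_rel fK.
Qed.
End Final.
Lemma uy_lem r : 2 <= r -> uniq [:: ord0; inord 1; inord 2; @ord_max r.+1].
Proof.
move=> hr.
have i1 : ((inord 1 : 'I_r.+2) : nat) = 1 by rewrite inordK.
have i2 : ((inord 2 : 'I_r.+2) : nat) = 2 by rewrite inordK // !ltnS (ltnW hr).
rewrite /= !inE !negb_or andbT -!val_eqE /= i1 i2.
apply/and3P; split => //; first (apply/andP; split => //); apply/eqP; lia.
Qed.

Theorem proposition3p3 (r : nat) (L1 L2 : {set edge r.+2}) :
  2 <= r ->
  two_point_line (@MK r.+2) L1 ->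
  two_point_line (@MK r.+2) L2 ->
  circuit (@MK r.+2) (L1 :|: L2) ->
  #|L1 :|: L2| = 4 ->
  let Fc := [set F | flat (@MK r.+2) F && ((L1 \subset F) || (L2 \subset F))] in
  proper_modular_cut (@MK r.+2) Fc /\
  (exists rN, extension_of_cut (@MK r.+2) Fc rN) /\
  (forall rN, extension_of_cut (@MK r.+2) Fc rN ->
     (forall R : realType, matroid_iso rN (vrank (@colK R r.+1))) /\
     matroid_iso rN (vrank (@colK 'F_3 r.+1))).
Proof.
move=> hr t1 t2 hC h4 Fc0.
have Hp0 := @Hp_phi 'F_3 r.+1 id (@inj_id _).
have [a [b [c [d [e1 [e2 [e3 [e4 [dist hL1 hL2 [j1 j2 j3 j4]]]]]]]]]] := config Hp0 t1 t2 hC h4.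
have two3 : ((2%:R : 'F_3) != 0)%R by [].
have i1 : ((inord 1 : 'I_r.+2) : nat) = 1 by rewrite inordK.
have i2 : ((inord 2 : 'I_r.+2) : nat) = 2 by rewrite inordK // !ltnS (ltnW hr).
have ux : uniq [:: a; b; c; d].
  rewrite /= !inE !negb_or andbT.
  by case/and5P: dist => -> -> -> -> /andP[-> ->].
have uy := uy_lem hr.
have [sg hsg] := perm_ext a ux uy erefl.
have ha : (sg a : nat) = 0 by rewrite (hsg 0 erefl).
have hb : (sg b : nat) = 1 by rewrite (hsg 1 erefl) /= i1.
have hc : (sg c : nat) = 2 by rewrite (hsg 2 erefl) /= i2.
have hd : sg d = ord_max by rewrite (hsg 3 erefl).
split; first exact: (proper_cut Hp0 two3 hL1 hL2 j1 j2 j3 j4).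
split; first by exists (rN0 (fun x => phi 'F_3 (id x)) a b c d); exact: (ext_rN0 Hp0 two3 hL1 hL2 j1 j2 j3 j4).
move=> rN hext.
have key : forall (K : fieldType), ((2%:R : K) != 0)%R -> matroid_iso rN (vrank (@colK K r.+1)).
  move=> K two.
  have Hp := @Hp_phi K r.+1 sg (@perm_inj _ sg).
  case: (gmap_bij sg) => f gK fK.
  exists f; split; first by exists (gmap sg).
  move=> X; rewrite (vrank_eq K ha hb hc hd hr fK gK).
  by symmetry; exact: (uniq_ext Hp two hL1 hL2 j1 j2 j3 j4 hext X).
split; last exact: key.
by move=> R; apply: key; rewrite pnatr_eq0.
Qed.
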